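(* Let $T,S\in\mathcal{B}_A(\mathcal{H})$. Then $$\omega_A(TS)\le \tfrac12\,\omega_A(ST)+\tfrac14\Big(\|T\|_A\|S\|_A+\|TS\|_A\Big).$$
   Context: $\mathcal{H}$ is a complex Hilbert space with inner product $\langle\cdot,\cdot\rangle$, and $A$ is a fixed nonzero positive bounded operator on $\mathcal{H}$. Set $\langle x,y\rangle_A=\langle Ax,y\rangle$ and $\|x\|_A=\|A^{1/2}x\|$. $\mathcal{B}_A(\mathcal{H})$ is the set of bounded operators $T$ for which there exists a bounded $S$ with $\langle Tx,y\rangle_A=\langle x,Sy\rangle_A$ for all $x,y$ (equivalently $\mathcal{R}(T^*A)\subseteq\mathcal{R}(A)$). For an operator $T$ with $\|Tx\|_A\le\lambda\|x\|_A$ for some $\lambda>0$ and all $x$, $\|T\|_A=\sup\{\|Tx\|_A: \|x\|_A=1\}$, and $\omega_A(T)=\sup\{|\langle Tx,x\rangle_A|:\|x\|_A=1\}$ is the $A$-numerical radius. *)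

(* Defs.v *)
From HB Require Import structures.
From mathcomp Require Import all_boot all_order all_algebra.
From mathcomp Require Import complex.
From mathcomp Require Import boolp classical_sets reals.
Set Implicit Arguments. Unset Strict Implicit. Unset Printing Implicit Defensive.
Import Order.TTheory GRing.Theory Num.Theory.
Local Open Scope ring_scope.
Local Open Scope classical_set_scope.

Section Hilbert.
Variables (R : realType) (V : lmodType R[i]) (ip : V -> V -> R[i]).

Definition hnorm (x : V) : R := Num.sqrt (complex.Re (ip x x)).

Record is_hilbert : Prop := IsHilbert {
  ip_linear : forall (a : R[i]) (x y z : V), ip (a *: x + y) z = a * ip x z + ip y z;
  ip_conj : forall x y : V, ip y x = conjc (ip x y);
  ip_pos : forall x : V, 0 <= ip x x;
  ip_definite : forall x : V, ip x x = 0 -> x = 0;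
  ip_complete : forall u : nat -> V,
    (forall e : R, 0 < e -> exists N : nat, forall m n : nat,
        (N <= m)%N -> (N <= n)%N -> hnorm (u m - u n) < e) ->
    exists l : V, forall e : R, 0 < e -> exists N : nat, forall n : nat,
        (N <= n)%N -> hnorm (u n - l) < e
}.

Definition bounded_op (T : V -> V) : Prop :=
  (forall (a : R[i]) (x y : V), T (a *: x + y) = a *: T x + T y) /\
  exists M : R, forall x : V, hnorm (T x) <= M * hnorm x.

Definition positive_op (A : V -> V) : Prop :=
  bounded_op A /\ forall x : V, 0 <= ip (A x) x.

Variable A : V -> V.

Definition ipA (x y : V) : R[i] := ip (A x) y.

(* ||x||_A = ||A^{1/2} x|| = sqrt <Ax, x> *)
Definition normA (x : V) : R := Num.sqrt (complex.Re (ipA x x)).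

Definition BA (T : V -> V) : Prop :=
  bounded_op T /\ exists S : V -> V, bounded_op S /\
    forall x y : V, ipA (T x) y = ipA x (S y).

Definition opnormA (T : V -> V) : R :=
  sup [set normA (T x) | x in [set x : V | normA x = 1]].

Definition omegaA (T : V -> V) : R :=
  sup [set ComplexField.Normc.normc (ipA (T x) x) | x in [set x : V | normA x = 1]].

End Hilbert.

(* Main.v *)
Require Import Defs.
From HB Require Import structures.
From mathcomp Require Import all_boot all_order all_algebra.
From mathcomp Require Import complex.
From mathcomp Require Import boolp classical_sets reals.
From mathcomp Require Import ring lra.
Import Order.TTheory GRing.Theory Num.Theory.
Set Implicit Arguments. Unset Strict Implicit. Unset Printing Implicit Defensive.
Local Open Scope ring_scope.
Local Open Scope classical_set_scope.

Section CX.
Variable R : realType.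
Implicit Types a b z w : R[i].
Lemma ReM a b : complex.Re (a * b) = complex.Re a * complex.Re b - complex.Im a * complex.Im b.
Proof. by case: a => a1 a2; case: b => b1 b2. Qed.
Lemma ImM a b : complex.Im (a * b) = complex.Re a * complex.Im b + complex.Im a * complex.Re b.
Proof. by case: a => a1 a2; case: b => b1 b2. Qed.
Lemma ReD a b : complex.Re (a + b) = complex.Re a + complex.Re b.
Proof. by case: a => a1 a2; case: b => b1 b2. Qed.
Lemma ImD a b : complex.Im (a + b) = complex.Im a + complex.Im b.
Proof. by case: a => a1 a2; case: b => b1 b2. Qed.
Lemma ReN a : complex.Re (- a) = - complex.Re a.
Proof. by case: a. Qed.
Lemma ImN a : complex.Im (- a) = - complex.Im a.
Proof. by case: a. Qed.
Lemma ReJ a : complex.Re (conjc a) = complex.Re a.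
Proof. by case: a. Qed.
Lemma ImJ a : complex.Im (conjc a) = - complex.Im a.
Proof. by case: a. Qed.
Lemma ReC (k : R) : complex.Re (k%:C)%C = k. Proof. by []. Qed.
Lemma ImC (k : R) : complex.Im (k%:C)%C = 0. Proof. by []. Qed.
Lemma normcE' a : ComplexField.Normc.normc a = Num.sqrt (complex.Re a ^+ 2 + complex.Im a ^+ 2).
Proof. by case: a. Qed.
End CX.

Section CX2.
Variable R : realType.
Implicit Types a b z w : R[i].
Local Notation nc := (@ComplexField.Normc.normc R).
Lemma complex_ext a b : complex.Re a = complex.Re b -> complex.Im a = complex.Im b -> a = b.
Proof. by case: a => a1 a2; case: b => b1 b2 /= -> ->. Qed.
Lemma cjD a b : conjc (a + b) = conjc a + conjc b.
Proof. apply: complex_ext; rewrite !(ReJ, ImJ, ReD, ImD); ring. Qed.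
Lemma cjN a : conjc (- a) = - conjc a.
Proof. apply: complex_ext; rewrite !(ReJ, ImJ, ReN, ImN); ring. Qed.
Lemma cjB a b : conjc (a - b) = conjc a - conjc b.
Proof. by rewrite cjD cjN. Qed.
Lemma cjM a b : conjc (a * b) = conjc a * conjc b.
Proof. apply: complex_ext; rewrite !(ReJ, ImJ, ReM, ImM); ring. Qed.
Lemma cjK a : conjc (conjc a) = a.
Proof. apply: complex_ext; rewrite !(ReJ, ImJ); ring. Qed.
Lemma nc_ge0 a : 0 <= nc a. Proof. by rewrite normcE' sqrtr_ge0. Qed.
Lemma nc_sq a : nc a ^+ 2 = complex.Re a ^+ 2 + complex.Im a ^+ 2.
Proof. by rewrite normcE' sqr_sqrtr // addr_ge0 ?sqr_ge0. Qed.
Lemma Re_le_nc a : complex.Re a <= nc a.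
Proof.
have h := nc_ge0 a; have h2 := nc_sq a.
have [Ha|Ha] := leP (complex.Re a) 0; first by apply: le_trans Ha h.
nra.
Qed.
Lemma nc_M a b : nc (a * b) = nc a * nc b. Proof. exact: ComplexField.Normc.normcM. Qed.
Lemma nc_J a : nc (conjc a) = nc a. Proof. by rewrite !normcE' ReJ ImJ sqrrN. Qed.
Lemma nc_N a : nc (- a) = nc a. Proof. by rewrite !normcE' ReN ImN !sqrrN. Qed.
Lemma nc_C (k : R) : nc (k%:C)%C = `|k|.
Proof. by rewrite normcE' /= expr0n /= addr0 sqrtr_sqr. Qed.
Lemma nc_D a b : nc (a + b) <= nc a + nc b. Proof. exact: le_normcD. Qed.
Lemma Re_Mu_le u z : nc u = 1 -> complex.Re (u * z) <= nc z.
Proof. by move=> hu; apply: le_trans (Re_le_nc _) _; rewrite nc_M hu mul1r. Qed.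
Lemma sq_le_implies (x y : R) : 0 <= y -> x ^+ 2 <= y ^+ 2 -> x <= y.
Proof. move=> hy h; have [Hx|Hx] := leP x 0; first by apply: le_trans Hx hy. nra. Qed.
Lemma sq_le (x y : R) : 0 <= x -> x <= y -> x ^+ 2 <= y ^+ 2.
Proof. move=> h1 h2; nra. Qed.
Lemma nc_eq0 a : nc a = 0 -> a = 0. Proof. exact: ComplexField.Normc.eq0_normc. Qed.
End CX2.

Section Form.
Variables (R : realType) (V : lmodType R[i]) (f : V -> V -> R[i]).
Hypothesis fL : forall (a : R[i]) x y z, f (a *: x + y) z = a * f x z + f y z.
Hypothesis fH : forall x y, f y x = conjc (f x y).
Hypothesis fP : forall x, 0 <= complex.Re (f x x).

Lemma f0_l z : f 0 z = 0.
Proof. have h := fL 1 0 0 z; rewrite scaler0 addr0 mul1r in h.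
by apply: (@addrI _ (f 0 z)); rewrite addr0 -h. Qed.
Lemma fD_l x y z : f (x + y) z = f x z + f y z.
Proof. by rewrite -[x in LHS]scale1r fL mul1r. Qed.
Lemma fZ_l a x z : f (a *: x) z = a * f x z.
Proof. by rewrite -[_ *: _]addr0 fL f0_l addr0. Qed.
Lemma fN_l x z : f (- x) z = - f x z.
Proof. by rewrite -scaleN1r fZ_l mulN1r. Qed.
Lemma fB_l x y z : f (x - y) z = f x z - f y z.
Proof. by rewrite fD_l fN_l. Qed.
Lemma fD_r x y z : f z (x + y) = f z x + f z y.
Proof. by rewrite fH fD_l rmorphD /= -!fH. Qed.
Lemma fZ_r a x z : f z (a *: x) = conjc a * f z x.
Proof. by rewrite fH fZ_l rmorphM /= -fH. Qed.
Lemma fN_r x z : f z (- x) = - f z x.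
Proof. by rewrite fH fN_l rmorphN /= -fH. Qed.
Lemma fB_r x y z : f z (x - y) = f z x - f z y.
Proof. by rewrite fD_r fN_r. Qed.
Lemma f0_r z : f z 0 = 0.
Proof. by rewrite fH f0_l rmorph0. Qed.
Lemma f_real x : complex.Im (f x x) = 0.
Proof. have := congr1 (@complex.Im R) (fH x x); rewrite ImJ => /eqP. 
rewrite -subr_eq0 opprK -mulr2n mulrn_eq0 /= => /eqP //. Qed.

Lemma fRe_sym x y : complex.Re (f y x) = complex.Re (f x y).
Proof. by rewrite fH ReJ. Qed.
Lemma fIm_sym x y : complex.Im (f y x) = - complex.Im (f x y).
Proof. by rewrite fH ImJ. Qed.

Definition nf x := Num.sqrt (complex.Re (f x x)).
Lemma nf_ge0 x : 0 <= nf x. Proof. exact: sqrtr_ge0. Qed.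
Lemma nf_sq x : nf x ^+ 2 = complex.Re (f x x).
Proof. by rewrite sqr_sqrtr. Qed.

Lemma CS x y : complex.Re (f x y) ^+ 2 + complex.Im (f x y) ^+ 2 <=
   complex.Re (f x x) * complex.Re (f y y).
Proof.
set n := _ + _; set d := complex.Re (f x x); set c := complex.Re (f y y).
have key : forall t : R, 0 <= d - 2 * t * n + t ^+ 2 * n * c.
  move=> t; have := fP (x + ((- t)%:C%C * f x y) *: y).
  rewrite !fD_l !fD_r !fZ_l !fZ_r.
  rewrite !(ReD, ReM, ImM, ImD, ReJ, ImJ, ReC, ImC) /= !f_real (fRe_sym x y) (fIm_sym x y).
  rewrite /n /d /c.
  set a := complex.Re (f x y); set b := complex.Im (f x y).
  set D := complex.Re (f x x); set Cc := complex.Re (f y y).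
  move=> h; apply: le_trans h _; rewrite le_eqVlt; apply/orP; left; apply/eqP; ring.
have n0 : 0 <= n by rewrite addr_ge0 ?sqr_ge0.
have d0 : 0 <= d := fP x. have c0 : 0 <= c := fP y.
have [cp|] := ltP 0 c.
  have ci : c * c^-1 = 1 by rewrite mulfV ?gt_eqF.
  have h := key c^-1.
  have h2 := mulr_ge0 (ltW cp) h.
  have -> : d * c = c * (d - 2 * c^-1 * n + c^-1 ^+ 2 * n * c) + n.
    rewrite expr2.
    have -> : c * (d - 2 * c^-1 * n + c^-1 * c^-1 * n * c) = c * d - 2 * (c * c^-1) * n + (c * c^-1) * (c * c^-1) * n by ring.
    rewrite ci; ring.
  lra.
rewrite le_eqVlt ltNge c0 orbF => /eqP c0'.
have [n0'|np] := eqVneq n 0; first by rewrite n0' c0' mulr0.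
have := key ((d + 1) / (2 * n)); rewrite c0' !mulr0 addr0.
have -> : 2 * ((d + 1) / (2 * n)) * n = d + 1.
  by field; rewrite np.
lra.
Qed.

Local Notation nc := (@ComplexField.Normc.normc R).
Lemma nc_f_le x y : nc (f x y) <= nf x * nf y.
Proof.
apply: sq_le_implies; first by rewrite mulr_ge0 ?nf_ge0.
by rewrite nc_sq exprMn !nf_sq CS.
Qed.
Lemma Re_f_le x y : complex.Re (f x y) <= nf x * nf y.
Proof. exact: le_trans (Re_le_nc _) (nc_f_le x y). Qed.
Lemma nfZ a x : nf (a *: x) = nc a * nf x.
Proof.
apply/eqP; rewrite eq_le; apply/andP; split; apply: sq_le_implies;
  rewrite ?mulr_ge0 ?nf_ge0 ?nc_ge0 // exprMn !nf_sq nc_sq fZ_l fZ_r;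
  rewrite !(ReM, ImM, ReJ, ImJ) f_real le_eqVlt; apply/orP; left; apply/eqP; ring.
Qed.
Lemma nf_tri x y : nf (x + y) <= nf x + nf y.
Proof.
apply: sq_le_implies; first by rewrite addr_ge0 ?nf_ge0.
rewrite nf_sq fD_l !fD_r !ReD (fRe_sym x y) sqrrD !nf_sq.
have := Re_f_le x y; lra.
Qed.
End Form.

Section Ops.
Variables (R : realType) (V : lmodType R[i]) (ip : V -> V -> R[i]) (A : V -> V).
Hypothesis hH : is_hilbert ip.
Hypothesis hA : positive_op ip A.
Local Notation nc := (@ComplexField.Normc.normc R).

Lemma ipL a x y z : ip (a *: x + y) z = a * ip x z + ip y z.
Proof. exact: (ip_linear hH a x y z). Qed.
Lemma ipH x y : ip y x = conjc (ip x y).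
Proof. exact: (ip_conj hH x y). Qed.
Lemma ipP x : 0 <= complex.Re (ip x x).
Proof. by have := ip_pos hH x; rewrite lecE => /andP[]. Qed.

Lemma lin0 (X : V -> V) : (forall a x y, X (a *: x + y) = a *: X x + X y) -> X 0 = 0.
Proof. move=> hX; have h := hX 1 0 0; rewrite scaler0 addr0 scale1r in h.
by apply: (@addrI _ (X 0)); rewrite addr0 -h. Qed.
Lemma linZ (X : V -> V) : (forall a x y, X (a *: x + y) = a *: X x + X y) ->
  forall a x, X (a *: x) = a *: X x.
Proof. by move=> hX a x; rewrite -[_ *: x]addr0 hX lin0 // addr0. Qed.
Lemma linD (X : V -> V) : (forall a x y, X (a *: x + y) = a *: X x + X y) ->
  forall x y, X (x + y) = X x + X y.
Proof. by move=> hX x y; rewrite -[x in LHS]scale1r hX scale1r. Qed.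

Lemma Alin a x y : A (a *: x + y) = a *: A x + A y.
Proof. by case: hA => [[h _] _]; apply: h. Qed.

Lemma Apos x : complex.Im (ip (A x) x) = 0 /\ 0 <= complex.Re (ip (A x) x).
Proof. case: hA => _ /(_ x); rewrite lecE /= => /andP[/eqP h1 h2]; by split. Qed.

Lemma AH x y : ip (A y) x = conjc (ip (A x) y).
Proof.
have hD := linD Alin; have hZ := linZ Alin.
have e1 := (Apos (x + y)).1.
rewrite hD !(fD_l ipL) !(fD_r ipL ipH) !ImD (Apos x).1 (Apos y).1 in e1.
have e2 := (Apos (x + 'i%C *: y)).1.
rewrite hD hZ !(fD_l ipL) !(fZ_l ipL) !(fD_r ipL ipH) !(fZ_r ipL ipH) in e2.
rewrite !(ImD, ImM, ReM, ReD) /= (Apos x).1 (Apos y).1 in e2.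
apply: complex_ext; rewrite ?ReJ ?ImJ; lra.
Qed.

Definition iA := ipA ip A.
Lemma aL a x y z : iA (a *: x + y) z = a * iA x z + iA y z.
Proof. by rewrite /iA /ipA Alin ipL. Qed.
Lemma aH x y : iA y x = conjc (iA x y).
Proof. exact: AH. Qed.
Lemma aP x : 0 <= complex.Re (iA x x).
Proof. exact: (Apos x).2. Qed.

End Ops.

Section Bound.
Variables (R : realType) (V : lmodType R[i]) (ip : V -> V -> R[i]) (A : V -> V).
Hypothesis hH : is_hilbert ip.
Hypothesis hA : positive_op ip A.
Local Notation nc := (@ComplexField.Normc.normc R).
Local Notation iA := (iA ip A).
Local Notation nA := (nf iA).
Local Notation hn := (nf ip).
Let aL := aL hH hA. Let aH := aH hH hA. Let aP := aP hA.
Let ipL := ipL hH. Let ipH := ipH hH. Let ipP := ipP hH.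

Lemma bernoulli (q : R) n : 1 <= q -> 1 + n%:R * (q - 1) <= q ^+ n.
Proof.
move=> hq; elim: n => [|n IH]; first by rewrite mul0r addr0 expr0.
rewrite exprS -natr1.
have h2 : q * (1 + n%:R * (q - 1)) <= q * q ^+ n.
  by rewrite ler_pM2l //; apply: lt_le_trans hq.
have h3 : 0 <= n%:R * ((q - 1) * (q - 1)) :> R by rewrite mulr_ge0 // mulr_ge0 // subr_ge0.
nra.
Qed.

Lemma nA_hn : exists KA, 0 <= KA /\ forall z, nA z ^+ 2 <= KA * hn z ^+ 2.
Proof.
case: hA => [[_ [MA hMA]] _].
exists `|MA|; split => // z.
rewrite (nf_sq aP).
apply: le_trans (Re_f_le ipL ipH ipP (A z) z) _.
apply: le_trans (_ : `|MA| * hn z * hn z <= _); last by rewrite expr2 mulrA.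
apply: ler_wpM2r; first exact: nf_ge0.
apply: le_trans (hMA z) _; apply: ler_wpM2r; [exact: nf_ge0 | exact: ler_norm].
Qed.

Lemma selfadj_contr (Rf : V -> V) :
  (forall y, hn (Rf y) <= hn y) -> (forall y z, iA (Rf y) z = iA y (Rf z)) ->
  forall y, nA (Rf y) <= nA y.
Proof.
move=> hb hs y.
have [KA [KA0 hKA]] := nA_hn.
have adjn : forall j y z, iA (iter j Rf y) z = iA y (iter j Rf z).
  elim=> [|j IH] y0 z0 //=; by rewrite hs IH -iterSr.
have hnb : forall j, hn (iter j Rf y) <= hn y.
  by elim=> [|j IH] //=; apply: le_trans (hb _) IH.
pose f n := nA (iter (2 ^ n) Rf y).
set a := nA y; set h := hn y.
have a0 : 0 <= a := nf_ge0 _ _.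
have f0 : forall n, 0 <= f n by move=> n; apply: nf_ge0.
have fsq : forall n, f n ^+ 2 <= f n.+1 * a.
  move=> n; rewrite /f (nf_sq aP) adjn -iterD addnn -mul2n -expnS mulrC.
  exact: Re_f_le aL aH aP _ _.
have fb : forall n, f n ^+ 2 <= KA * h ^+ 2.
  move=> n; apply: le_trans (hKA _) _; apply: ler_wpM2l => //.
  by apply: sq_le; [exact: nf_ge0 | exact: hnb].
rewrite leNgt; apply/negP => hlt.
have e0 : f 0%N = nA (Rf y) by [].
rewrite -/a -e0 in hlt.
have ap : 0 < a.
  rewrite lt_neqAle a0 andbT; apply/negP => /eqP a0'.
  have := fsq 0%N; rewrite -a0' mulr0 => h0.
  have : f 0%N <= 0 by apply: sq_le_implies; rewrite // expr0n.
  rewrite -a0' in hlt; lra.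
set q := f 0%N / a.
have q1 : 1 <= q by rewrite ler_pdivlMr // mul1r ltW.
have claim : forall n, q ^+ (2 ^ n) * a <= f n.
  elim=> [|n IH]; first by rewrite expn0 expr1 /q divfK ?gt_eqF.
  have h1 : (q ^+ (2 ^ n) * a) ^+ 2 <= f n ^+ 2.
    by apply: sq_le => //; rewrite mulr_ge0 // exprn_ge0 // (le_trans _ q1).
  have h2 := fsq n.
  have e : (q ^+ (2 ^ n) * a) ^+ 2 = q ^+ (2 ^ n.+1) * a * a.
    by rewrite expnS mul2n -addnn exprD; ring.
  rewrite e in h1.
  have : q ^+ (2 ^ n.+1) * a * a <= f n.+1 * a by apply: le_trans h1 h2.
  by rewrite ler_pM2r.
pose t := (KA * h ^+ 2 + 1) / ((q - 1) * a).
have q1' : 0 < q - 1.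
  rewrite subr_gt0 /q ltr_pdivlMr // mul1r //.
have t0 : 0 <= t.
  apply: divr_ge0; last by rewrite mulr_ge0 // ltW.
  by rewrite addr_ge0 // mulr_ge0 // sqr_ge0.
have [n hn] : exists n : nat, t < n%:R.
  exists (Num.bound t); exact: archi_boundP.
have hb2 := bernoulli (2 ^ n) q1.
have hn2 : (n%:R : R) <= (2 ^ n)%:R by rewrite ler_nat ltnW // ltn_expl.
have hc := claim n; have hf := fb n.
have hs2 : t * ((q - 1) * a) = KA * h ^+ 2 + 1 by rewrite /t divfK // mulf_neq0 // gt_eqF.
set Q := q ^+ (2 ^ n) in hb2 hc.
have hQa : n%:R * (q - 1) * a <= Q * a.
  rewrite ler_pM2r //. 
  apply: le_trans hb2; have : n%:R * (q - 1) <= (2 ^ n)%:R * (q - 1) by rewrite ler_pM2r.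
  lra.
have hQ1 : 1 <= Q by rewrite /Q exprn_ege1.
have hF : (Q * a) ^+ 2 <= f n ^+ 2 by apply: sq_le => //; rewrite mulr_ge0 // (le_trans _ hQ1).
have s1 : t * ((q - 1) * a) < n%:R * ((q - 1) * a) by rewrite ltr_pM2r // mulr_gt0.
rewrite mulrA in s1.
have hKh : 0 <= KA * h ^+ 2 by rewrite mulr_ge0 // sqr_ge0.
have s2 : 1 <= Q * a by lra.
have s3 : Q * a <= (Q * a) ^+ 2.
  rewrite expr2; rewrite -{1}[Q * a]mul1r; apply: ler_wpM2r; lra.
lra.
Qed.

Lemma inv_le (M x y : R) : 0 < M -> M^-1 * x <= y -> x <= M * y.
Proof. move=> M0 h; rewrite -(ler_pM2l M0) mulrA mulfV ?gt_eqF // mul1r in h; exact: h. Qed.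

Lemma le_inv (M x y : R) : 0 < M -> x <= M * y -> M^-1 * x <= y.
Proof. move=> M0 h; rewrite -(ler_pM2l M0) mulrA mulfV ?gt_eqF // mul1r; exact: h. Qed.

Lemma Abound (X X' : V -> V) :
  (forall a x y, X (a *: x + y) = a *: X x + X y) ->
  (exists M, forall x, hn (X x) <= M * hn x) ->
  (forall a x y, X' (a *: x + y) = a *: X' x + X' y) ->
  (exists M, forall x, hn (X' x) <= M * hn x) ->
  (forall x y, iA (X x) y = iA x (X' y)) ->
  exists c, 0 <= c /\ forall y, nA (X y) <= c * nA y.
Proof.
move=> lX [M1 hM1] lX' [M2 hM2] adj.
have n1 := ler_norm M1; have n2 := ler_norm M2.
have n1' : 0 <= `|M1| by []. have n2' : 0 <= `|M2| by [].
pose M := (`|M1| + 1) * (`|M2| + 1).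
have M0 : 0 < M by rewrite /M mulr_gt0 //; lra.
have hXX : forall y, hn (X' (X y)) <= M * hn y.
  move=> y; apply: le_trans (hM2 _) _.
  apply: le_trans (_ : (`|M2| + 1) * hn (X y) <= _).
    apply: ler_wpM2r; [exact: nf_ge0 | lra].
  rewrite /M [(_ + 1) * (`|M2| + 1)]mulrC -mulrA; apply: ler_wpM2l; first lra.
  apply: le_trans (hM1 y) _; apply: ler_wpM2r; [exact: nf_ge0 | lra].
pose Rf y := (M^-1)%:C%C *: X' (X y).
have hb : forall y, hn (Rf y) <= hn y.
  move=> y; rewrite /Rf (nfZ ipL ipH ipP) nc_C ger0_norm; last by rewrite invr_ge0 ltW.
  by apply: le_inv => //; exact: hXX.
have hs : forall y z, iA (Rf y) z = iA y (Rf z).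
  move=> y z; rewrite /Rf (fZ_l aL) (fZ_r aL aH) conjc_real.
  by congr (_ * _); rewrite aH -adj -aH adj.
have hc := selfadj_contr hb hs.
exists (Num.sqrt M); split; first exact: sqrtr_ge0.
move=> y; apply: sq_le_implies; first by rewrite mulr_ge0 ?sqrtr_ge0 ?nf_ge0.
rewrite exprMn (sqr_sqrtr (ltW M0)).
rewrite (nf_sq aP) adj.
apply: le_trans (Re_f_le aL aH aP _ _) _.
have : nA (X' (X y)) <= M * nA y.
  apply: inv_le => //.
  by have := hc y; rewrite /Rf (nfZ aL aH aP) nc_C ger0_norm; last by rewrite invr_ge0 ltW.
have := nf_ge0 iA y; move=> h0 h1.
rewrite expr2 mulrA [M * _]mulrC -mulrA; apply: ler_wpM2l => //.
Qed.
End Bound.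
Section SupL.
Variables (R : realType) (V : lmodType R[i]) (ip : V -> V -> R[i]) (A : V -> V).
Hypothesis hH : is_hilbert ip.
Hypothesis hA : positive_op ip A.
Local Notation nc := (@ComplexField.Normc.normc R).
Local Notation iA := (iA ip A).
Local Notation nA := (nf iA).
Local Notation hn := (nf ip).
Let aL := aL hH hA. Let aH := aH hH hA. Let aP := aP hA.

Lemma normA_nf x : normA ip A x = nA x. Proof. by []. Qed.

Lemma normalize y : nA y != 0 ->
  nA (((nA y)^-1)%:C%C *: y) = 1.
Proof.
move=> hy; rewrite (nfZ aL aH aP) nc_C ger0_norm ?invr_ge0 ?nf_ge0 //.
by rewrite mulVf.
Qed.

Lemma unit_exists : (exists x, A x <> 0) -> exists e, nA e = 1.
Proof.
move=> [x0 hx0].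
have [z hz] : exists z, nA z != 0.
  apply: contrapT => hn; apply: hx0.
  have h0 : forall z, nA z = 0.
    move=> z; apply/eqP; apply/negPn/negP => h; apply: hn; by exists z.
  apply: (ip_definite hH).
  apply: nc_eq0; apply/eqP; rewrite eq_le nc_ge0 andbT.
  by have := nc_f_le aL aH aP x0 (A x0); rewrite !h0 mul0r.
by exists (((nA z)^-1)%:C%C *: z); apply: normalize.
Qed.

Variable X : V -> V.
Hypothesis lX : forall a x y, X (a *: x + y) = a *: X x + X y.
Hypothesis bX : exists c, forall y, nA (X y) <= c * nA y.
Hypothesis ex1 : exists e, nA e = 1.

Let E := [set normA ip A (X x) | x in [set x | normA ip A x = 1]].
Lemma E_ub : has_ubound E.
Proof.
case: bX => c hc; exists c => r [x /= hx <-].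
by rewrite normA_nf; apply: le_trans (hc x) _; rewrite normA_nf in hx; rewrite hx mulr1.
Qed.
Lemma opn_ub1 x : nA x = 1 -> nA (X x) <= opnormA ip A X.
Proof. by move=> hx; apply: (ub_le_sup E_ub); exists x. Qed.
Lemma opn_ge0 : 0 <= opnormA ip A X.
Proof. case: ex1 => e he; exact: le_trans (nf_ge0 _ _) (opn_ub1 he). Qed.
Lemma opn_ub y : nA (X y) <= opnormA ip A X * nA y.
Proof.
have [h0|hy] := eqVneq (nA y) 0.
  case: bX => c hc; rewrite h0 mulr0; by have := hc y; rewrite h0 mulr0.
have := opn_ub1 (normalize hy).
rewrite (linZ lX) (nfZ aL aH aP) nc_C ger0_norm ?invr_ge0 ?nf_ge0 // => h.
rewrite mulrC; apply: inv_le; last by exact: h.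
by rewrite lt_neqAle eq_sym hy nf_ge0.
Qed.

Let F := [set nc (ipA ip A (X x) x) | x in [set x | normA ip A x = 1]].
Lemma F_ub : has_ubound F.
Proof.
case: bX => c hc; exists c => r [x /= hx <-].
apply: le_trans (nc_f_le aL aH aP _ _) _; rewrite normA_nf in hx.
by rewrite hx mulr1; apply: le_trans (hc x) _; rewrite hx mulr1.
Qed.
Lemma om_ub1 x : nA x = 1 -> nc (iA (X x) x) <= omegaA ip A X.
Proof. by move=> hx; apply: (ub_le_sup F_ub); exists x. Qed.
Lemma om_ge0 : 0 <= omegaA ip A X.
Proof. case: ex1 => e he; exact: le_trans (nc_ge0 _) (om_ub1 he). Qed.
Lemma om_ub y : nc (iA (X y) y) <= omegaA ip A X * nA y ^+ 2.
Proof.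
have [h0|hy] := eqVneq (nA y) 0.
  case: bX => c hc; rewrite h0 expr0n mulr0 /=.
  by have := nc_f_le aL aH aP (X y) y; rewrite h0 mulr0.
have := om_ub1 (normalize hy).
rewrite (linZ lX) (fZ_l aL) (fZ_r aL aH) conjc_real !nc_M nc_C ger0_norm ?invr_ge0 ?nf_ge0 // => h.
rewrite mulrC; apply: inv_le; first by rewrite exprn_gt0 // lt_neqAle eq_sym hy nf_ge0.
by rewrite -exprVn expr2 -mulrA.
Qed.
End SupL.

Section RealL.
Variable R : realType.
Lemma RL (k ki a1 b1 a2 b2 p q N : R) : 0 < k -> 0 < ki -> k * ki = 1 ->
  0 <= a1 -> 0 <= b1 -> 0 <= a2 -> 0 <= b2 -> 0 <= p -> 0 <= q -> 0 <= N ->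
  ki * a1 ^+ 2 + k * b1 ^+ 2 <= N * p ^+ 2 ->
  ki * a2 ^+ 2 + k * b2 ^+ 2 <= N * q ^+ 2 ->
  ki * a1 * a2 + k * b1 * b2 <= N / 2 * (k * p ^+ 2 + ki * q ^+ 2).
Proof.
move=> k0 ki0 kk a10 b10 a20 b20 p0 q0 N0 h1 h2.
set L := ki * a1 * a2 + k * b1 * b2.
have L0 : 0 <= L by rewrite /L addr_ge0 // mulr_ge0 // mulr_ge0 // ltW.
have c1 : L ^+ 2 <= (ki * a1 ^+ 2 + k * b1 ^+ 2) * (ki * a2 ^+ 2 + k * b2 ^+ 2).
  have e : (ki * a1 ^+ 2 + k * b1 ^+ 2) * (ki * a2 ^+ 2 + k * b2 ^+ 2) - L ^+ 2
          = (k * ki) * (a1 * b2 - b1 * a2) ^+ 2 by rewrite /L; ring.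
  have : 0 <= (k * ki) * (a1 * b2 - b1 * a2) ^+ 2 by rewrite kk mul1r sqr_ge0.
  rewrite -e; lra.
have c2 : (ki * a1 ^+ 2 + k * b1 ^+ 2) * (ki * a2 ^+ 2 + k * b2 ^+ 2) <= (N * p ^+ 2) * (N * q ^+ 2).
  apply: ler_pM => //; rewrite addr_ge0 // mulr_ge0 ?sqr_ge0 // ltW //.
have c3 : L <= N * p * q.
  apply: sq_le_implies; first by rewrite mulr_ge0 // mulr_ge0.
  have -> : (N * p * q) ^+ 2 = (N * p ^+ 2) * (N * q ^+ 2) by ring.
  exact: le_trans c1 c2.
have c4 : 2 * p * q <= k * p ^+ 2 + ki * q ^+ 2.
  have e : k * p ^+ 2 + ki * q ^+ 2 - 2 * p * q = ki * (k * p - q) ^+ 2.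
    have -> : ki * (k * p - q) ^+ 2 = (k * ki) * k * p ^+ 2 - 2 * (k * ki) * p * q + ki * q ^+ 2 by ring.
    rewrite kk; ring.
  have : 0 <= ki * (k * p - q) ^+ 2 by rewrite mulr_ge0 ?sqr_ge0 // ltW.
  rewrite -e; lra.
have : N * (2 * p * q) <= N * (k * p ^+ 2 + ki * q ^+ 2) by apply: ler_wpM2l.
move=> h; have -> : N / 2 * (k * p ^+ 2 + ki * q ^+ 2) = (N * (k * p ^+ 2 + ki * q ^+ 2)) / 2 by ring.
have e2 : N * (2 * p * q) = 2 * (N * p * q) by ring.
rewrite e2 in h.
lra.
Qed.

Lemma Re_uk (u z : R[i]) (k : R) : ComplexField.Normc.normc u = 1 -> 0 <= k ->
  complex.Re (u * ((k%:C)%C * z)) <= k * ComplexField.Normc.normc z.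
Proof.
move=> hu hk; apply: le_trans (Re_le_nc _) _.
by rewrite !nc_M hu nc_C ger0_norm // mul1r.
Qed.
End RealL.

Section Core.
Variables (R : realType) (V : lmodType R[i]) (ip : V -> V -> R[i]) (A : V -> V).
Hypothesis hH : is_hilbert ip.
Hypothesis hA : positive_op ip A.
Local Notation nc := (@ComplexField.Normc.normc R).
Local Notation iA := (iA ip A).
Local Notation nA := (nf iA).
Let aL := aL hH hA. Let aH := aH hH hA. Let aP := aP hA.
Variables (T S T' S' : V -> V) (al be P om : R).
Hypothesis lT : forall a x y, T (a *: x + y) = a *: T x + T y.
Hypothesis lS : forall a x y, S (a *: x + y) = a *: S x + S y.
Hypothesis lT' : forall a x y, T' (a *: x + y) = a *: T' x + T' y.
Hypothesis lS' : forall a x y, S' (a *: x + y) = a *: S' x + S' y.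
Hypothesis adjT : forall x y, iA (T x) y = iA x (T' y).
Hypothesis adjS : forall x y, iA (S x) y = iA x (S' y).
Hypothesis bT : forall y, nA (T y) <= al * nA y.
Hypothesis bS : forall y, nA (S y) <= be * nA y.
Hypothesis bT' : forall y, nA (T' y) <= al * nA y.
Hypothesis bS' : forall y, nA (S' y) <= be * nA y.
Hypothesis bTS : forall y, nA (T (S y)) <= P * nA y.
Hypothesis bST : forall y, nc (iA (S (T y)) y) <= om * nA y ^+ 2.
Hypothesis al0 : 0 < al.
Hypothesis be0 : 0 < be.
Hypothesis P0 : 0 <= P.
Hypothesis om0 : 0 <= om.

Lemma adjTr x y : iA x (T y) = iA (T' x) y.
Proof. by rewrite aH adjT -aH. Qed.
Lemma adjSr x y : iA x (S y) = iA (S' x) y.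
Proof. by rewrite aH adjS -aH. Qed.

Let k := al / be.
Let ki := be / al.
Lemma k0 : 0 < k. Proof. by rewrite divr_gt0. Qed.
Lemma ki0 : 0 < ki. Proof. by rewrite divr_gt0. Qed.
Lemma kki : k * ki = 1.
Proof. by rewrite /k /ki mulrA divfK ?gt_eqF // mulfV ?gt_eqF. Qed.
Lemma kbe : k * be = al. Proof. by rewrite /k divfK ?gt_eqF. Qed.
Lemma kial : ki * al = be. Proof. by rewrite /ki divfK ?gt_eqF. Qed.

Lemma ReCM (c : R) (z : R[i]) : complex.Re ((c%:C)%C * z) = c * complex.Re z.
Proof. by rewrite ReM /= mul0r subr0. Qed.

Lemma nAZ (c : R) y : 0 <= c -> nA ((c%:C)%C *: y) = c * nA y.
Proof. by move=> hc; rewrite (nfZ aL aH aP) nc_C ger0_norm. Qed.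

Lemma Xb z : ki * nA (T z) ^+ 2 + k * nA (S' z) ^+ 2 <= (al * be + P) * nA z ^+ 2.
Proof.
set X := _ + _.
have hk := k0; have hki := ki0.
pose b := (ki%:C)%C *: T z; pose a := (k%:C)%C *: S' z.
pose w := T' b + S a.
have eX : complex.Re (iA z w) = X.
  rewrite /w /b /a (linZ lT') (linZ lS) (fD_r aL aH) !(fZ_r aL aH) !conjc_real.
  rewrite -adjT adjSr ReD !ReCM -!(nf_sq aP) /X; ring.
have X0 : 0 <= X by rewrite /X addr_ge0 // mulr_ge0 ?sqr_ge0 // ltW.
have h1 : X <= nA z * nA w by rewrite -eX; exact: Re_f_le aL aH aP _ _.
set t := nA (T z); set s := nA (S' z).
have t0 : 0 <= t := nf_ge0 _ _. have s0 : 0 <= s := nf_ge0 _ _.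
have hb : nA b = ki * t by rewrite nAZ // ltW.
have ha : nA a = k * s by rewrite nAZ // ltW.
have w2 : nA w ^+ 2 <= al ^+ 2 * (ki * t) ^+ 2 + be ^+ 2 * (k * s) ^+ 2 + 2 * (P * (k * s) * (ki * t)).
  rewrite (nf_sq aP) /w (fD_l aL) !(fD_r aL aH) !ReD -!(nf_sq aP) (fRe_sym aH (S a) (T' b)).
  have e1 : nA (T' b) ^+ 2 <= al ^+ 2 * (ki * t) ^+ 2.
    rewrite -hb -exprMn; apply: sq_le; [exact: nf_ge0 | exact: bT'].
  have e2 : nA (S a) ^+ 2 <= be ^+ 2 * (k * s) ^+ 2.
    rewrite -ha -exprMn; apply: sq_le; [exact: nf_ge0 | exact: bS].
  have e3 : complex.Re (iA (S a) (T' b)) <= P * (k * s) * (ki * t).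
    rewrite -adjT -ha -hb; apply: le_trans (Re_f_le aL aH aP _ _) _.
    apply: ler_wpM2r; [exact: nf_ge0 | exact: bTS].
  lra.
have w3 : nA w ^+ 2 <= (al * be + P) * X.
  apply: le_trans w2 _.
  have kk := kki.
  have e : al ^+ 2 * (ki * t) ^+ 2 + be ^+ 2 * (k * s) ^+ 2 = al * be * X.
    have ea : al ^+ 2 * (ki * t) ^+ 2 = al * be * (ki * t ^+ 2) by rewrite -kial; ring.
    have eb : be ^+ 2 * (k * s) ^+ 2 = al * be * (k * s ^+ 2) by rewrite -kbe; ring.
    by rewrite ea eb /X mulrDr.
  have e4 : 2 * (P * (k * s) * (ki * t)) <= P * X.
    have -> : 2 * (P * (k * s) * (ki * t)) = P * (2 * (k * ki) * s * t) by ring.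
    rewrite kk mulr1.
    apply: ler_wpM2l => //.
    have : 0 <= ki * (t - k * s) ^+ 2 by rewrite mulr_ge0 ?sqr_ge0 // ltW.
    have -> : ki * (t - k * s) ^+ 2 = ki * t ^+ 2 - 2 * (k * ki) * s * t + (k * ki) * k * s ^+ 2 by ring.
    rewrite kk => h0; rewrite /X /t /s in h0 *; lra.
  rewrite e; lra.
have nz0 : 0 <= nA z := nf_ge0 _ _.
have nw0 : 0 <= nA w := nf_ge0 _ _.
have h2 : X ^+ 2 <= nA z ^+ 2 * ((al * be + P) * X).
  have : X ^+ 2 <= (nA z * nA w) ^+ 2 by apply: sq_le.
  rewrite exprMn => h; apply: le_trans h _; apply: ler_wpM2l => //; exact: sqr_ge0.
have N0 : 0 <= al * be + P by rewrite addr_ge0 // mulr_ge0 // ltW.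
have [Xz|Xp] := eqVneq X 0; first by rewrite Xz mulr_ge0 // sqr_ge0.
have Xp' : 0 < X by rewrite lt_neqAle eq_sym Xp X0.
have h3 : X * X <= X * ((al * be + P) * nA z ^+ 2).
  move: h2; rewrite expr2 => h2; apply: le_trans h2 _.
  rewrite le_eqVlt; apply/orP; left; apply/eqP; ring.
by rewrite ler_pM2l in h3.
Qed.

Let Mx x := (k%:C)%C *: S' (S x) + (ki%:C)%C *: T (T' x).
Let mm x := k * nA (S x) ^+ 2 + ki * nA (T' x) ^+ 2.
Let B := om / 2 + (al * be + P) / 4.

Lemma key x u : nc u = 1 ->
  complex.Re (u * iA (T (S x)) (Mx x)) + complex.Re (conjc u * iA x (T (S (Mx x))))
  <= 2 * B * mm x.
Proof.
move=> hu.
have hu' : nc (conjc u) = 1 by rewrite nc_J.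
have e1 : iA (T (S x)) (Mx x) = (k%:C)%C * iA (S (T (S x))) (S x) + (ki%:C)%C * iA (T (S x)) (T (T' x)).
  by rewrite /Mx (fD_r aL aH) !(fZ_r aL aH) !conjc_real -adjS.
have e3 : iA (S' (T' x)) (T (T' x)) = conjc (iA (S (T (T' x))) (T' x)).
  by rewrite adjTr aH -adjT -adjS.
have e2 : iA x (T (S (Mx x))) = (k%:C)%C * iA (S' (T' x)) (S' (S x)) + (ki%:C)%C * conjc (iA (S (T (T' x))) (T' x)).
  by rewrite adjTr adjSr /Mx (fD_r aL aH) !(fZ_r aL aH) !conjc_real e3.
rewrite e1 e2 !mulrDr !ReD.
have hk := ltW k0; have hki := ltW ki0.
have r1 := Re_uk (iA (S (T (S x))) (S x)) hu hk.
have r2 := Re_uk (iA (T (S x)) (T (T' x))) hu hki.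
have r3 := Re_uk (iA (S' (T' x)) (S' (S x))) hu' hk.
have r4 := Re_uk (conjc (iA (S (T (T' x))) (T' x))) hu' hki.
rewrite nc_J in r4.
have c1 := bST (S x). have c4 := bST (T' x).
have c2 := nc_f_le aL aH aP (T (S x)) (T (T' x)).
have c3 := nc_f_le aL aH aP (S' (T' x)) (S' (S x)).
have x1 := Xb (S x). have x2 := Xb (T' x).
have rl := RL k0 ki0 kki (nf_ge0 _ _) (nf_ge0 _ _) (nf_ge0 _ _) (nf_ge0 _ _) (nf_ge0 _ _) (nf_ge0 _ _)
   (addr_ge0 (mulr_ge0 (ltW al0) (ltW be0)) P0) x1 x2.
have d1 : k * nc (iA (S (T (S x))) (S x)) <= k * (om * nA (S x) ^+ 2) by apply: ler_wpM2l.
have d4 : ki * nc (iA (S (T (T' x))) (T' x)) <= ki * (om * nA (T' x) ^+ 2) by apply: ler_wpM2l.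
have d2 : ki * nc (iA (T (S x)) (T (T' x))) <= ki * (nA (T (S x)) * nA (T (T' x))) by apply: ler_wpM2l.
have d3 : k * nc (iA (S' (T' x)) (S' (S x))) <= k * (nA (S' (T' x)) * nA (S' (S x))) by apply: ler_wpM2l.
have eq : (2 * (om / 2) + 2 * ((al * be + P) / 4)) = om + (al * be + P) / 2 by field.
rewrite eq.
have e4 : k * (nA (S' (T' x)) * nA (S' (S x))) = k * nA (S' (S x)) * nA (S' (T' x)) by ring.
rewrite e4 in d3.
have e5 : ki * (nA (T (S x)) * nA (T (T' x))) = ki * nA (T (S x)) * nA (T (T' x)) by ring.
rewrite e5 in d2.
lra.
Qed.

Lemma B0 : 0 <= B.
Proof. by rewrite /B addr_ge0 // divr_ge0 // addr_ge0 // mulr_ge0 // ltW. Qed.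

Lemma ReuC (u z : R[i]) (c : R) : complex.Re (u * ((c%:C)%C * z)) = c * complex.Re (u * z).
Proof. by rewrite mulrCA ReCM. Qed.

Lemma lTS a y z : T (S (a *: y + z)) = a *: T (S y) + T (S z).
Proof. by rewrite lS lT. Qed.

Lemma core u x : nc u = 1 -> nA x = 1 -> complex.Re (u * iA (T (S x)) x) <= B.
Proof.
move=> hu hx.
pose E := [set complex.Re (u * iA (T (S y)) y) | y in [set y | nA y = 1]].
have Eub : forall y, nA y = 1 -> complex.Re (u * iA (T (S y)) y) <= P.
  move=> y hy; apply: le_trans (Re_Mu_le _ hu) _.
  apply: le_trans (nc_f_le aL aH aP _ _) _; rewrite hy mulr1.
  by have := bTS y; rewrite hy mulr1.
have hsup : has_sup E.
  split; first by exists (complex.Re (u * iA (T (S x)) x)), x.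
  by exists P => r [y hy <-]; exact: Eub y hy.
set lam := sup E.
have hxl : complex.Re (u * iA (T (S x)) x) <= lam by apply: sup_upper_bound => //; exists x.
apply: le_trans hxl _.
rewrite leNgt; apply/negP => hBl.
have hB0 := B0.
have l0 : 0 < lam := le_lt_trans hB0 hBl.
have hl : forall y, complex.Re (u * iA (T (S y)) y) <= lam * nA y ^+ 2.
  move=> y; have [h0|hy] := eqVneq (nA y) 0.
    rewrite h0 expr0n /= mulr0; apply: le_trans (Re_Mu_le _ hu) _.
    by have := nc_f_le aL aH aP (T (S y)) y; rewrite h0 mulr0.
  have hn := normalize hH hA hy.
  have : complex.Re (u * iA (T (S (((nA y)^-1)%:C%C *: y))) (((nA y)^-1)%:C%C *: y)) <= lam.
    by apply: sup_upper_bound => //; exists (((nA y)^-1)%:C%C *: y).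
  rewrite (linZ lS) (linZ lT) (fZ_l aL) (fZ_r aL aH) conjc_real !ReuC => h.
  have ny : 0 < nA y by rewrite lt_neqAle eq_sym hy nf_ge0.
  rewrite [lam * _]mulrC; apply: (@inv_le _ (nA y ^+ 2)); first by rewrite exprn_gt0.
  by rewrite -exprVn expr2 -mulrA.
pose c := ((2 * lam)%:C)%C.
have cc : conjc c = c by rewrite /c conjc_real.
pose g y z := c * iA y z - (u * iA (T (S y)) z + conjc u * iA y (T (S z))).
have gL : forall a y y' z, g (a *: y + y') z = a * g y z + g y' z.
  by move=> a y y' z; rewrite /g lTS !aL; ring.
have gH : forall y z, g z y = conjc (g y z).
  move=> y z; rewrite /g !cjB !cjD !cjM cc cjK -!aH; ring.
have gRe : forall y, complex.Re (g y y) = 2 * lam * nA y ^+ 2 - 2 * complex.Re (u * iA (T (S y)) y).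
  move=> y; rewrite /g /c !(ReD, ReN) ReCM (nf_sq aP) (aH (T (S y)) y) -cjM ReJ; ring.
have gP : forall y, 0 <= complex.Re (g y y).
  by move=> y; rewrite gRe; have := hl y; lra.
have gUp : forall y, complex.Re (g y y) <= 2 * (lam + P) * nA y ^+ 2.
  move=> y; rewrite gRe.
  have hu' : nc (- u) = 1 by rewrite nc_N.
  have := Re_Mu_le (iA (T (S y)) y) hu'.
  rewrite mulNr ReN => h1.
  have h2 := nc_f_le aL aH aP (T (S y)) y.
  have h3 : nA (T (S y)) * nA y <= P * nA y * nA y by apply: ler_wpM2r; [exact: nf_ge0 | exact: bTS].
  rewrite expr2; lra.
set K0 := k * (be * be) + ki * (al * al).
set D := (lam + P) * K0 ^+ 2.
have D0 : 0 <= D by rewrite /D mulr_ge0 ?sqr_ge0 // addr_ge0 // ltW.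
have lB : 0 < lam - B by rewrite subr_gt0.
set eps := Num.min (lam / 2) ((lam - B) ^+ 2 * lam ^+ 2 / (D + 1)).
have eps0 : 0 < eps.
  rewrite lt_min; apply/andP; split; first by rewrite divr_gt0.
  by rewrite divr_gt0 ?mulr_gt0 ?exprn_gt0 //; lra.
have eps1 : eps <= lam / 2 by rewrite ge_min lexx.
have eps2 : eps <= (lam - B) ^+ 2 * lam ^+ 2 / (D + 1) by rewrite ge_min lexx orbT.
have [r [x0 hx0 <-] hr] := sup_adherent eps0 hsup.
rewrite /= in hx0.
set w0 := iA (T (S x0)) x0 in hr.
rewrite -/lam in hr.
have em : complex.Re (iA x0 (Mx x0)) = mm x0.
  rewrite /Mx (fD_r aL aH) !(fZ_r aL aH) !conjc_real -adjS adjTr ReD !ReCM -!(nf_sq aP) //.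
have hm : 2 * complex.Re (u * w0) <= mm x0.
  have h1 : complex.Re (u * w0) <= nA (S x0) * nA (T' x0).
    apply: le_trans (Re_Mu_le _ hu) _; rewrite /w0 adjT; exact: nc_f_le aL aH aP _ _.
  have h2 : 0 <= ki * (k * nA (S x0) - nA (T' x0)) ^+ 2 by rewrite mulr_ge0 ?sqr_ge0 // ltW // ki0.
  have kk := kki.
  have e6 : ki * (k * nA (S x0) - nA (T' x0)) ^+ 2 = (k * ki) * k * nA (S x0) ^+ 2 - 2 * (k * ki) * nA (S x0) * nA (T' x0) + ki * nA (T' x0) ^+ 2 by ring.
  rewrite e6 in h2.
  rewrite kk /mm in h2 *; lra.
have hG : 2 * (lam - B) * mm x0 <= complex.Re (g x0 (Mx x0)).
  rewrite /g /c !(ReD, ReN) ReCM em.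
  have := key x0 hu; lra.
have cs := CS gL gH gP x0 (Mx x0).
have g1 : complex.Re (g x0 x0) <= 2 * eps by rewrite gRe hx0 expr1n mulr1 -/w0; lra.
have nM : nA (Mx x0) <= K0.
  rewrite /Mx; apply: le_trans (nf_tri aL aH aP _ _) _.
  rewrite !nAZ ?(ltW k0) ?(ltW ki0) //.
  have s1 : nA (S' (S x0)) <= be * be.
    by apply: le_trans (bS' _) _; apply: ler_wpM2l; [exact: ltW | by have := bS x0; rewrite hx0 mulr1].
  have s2 : nA (T (T' x0)) <= al * al.
    by apply: le_trans (bT _) _; apply: ler_wpM2l; [exact: ltW | by have := bT' x0; rewrite hx0 mulr1].
  apply: lerD; apply: ler_wpM2l => //; [exact: ltW k0 | exact: ltW ki0].
have g2 : complex.Re (g (Mx x0) (Mx x0)) <= 2 * D.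
  apply: le_trans (gUp _) _; rewrite /D mulrA; apply: ler_wpM2l; first by rewrite mulr_ge0 // addr_ge0 // ltW.
  by apply: sq_le => //; exact: nf_ge0.
set G := complex.Re (g x0 (Mx x0)) in hG cs.
have m0 : lam <= mm x0 by lra.
have Gl : 2 * (lam - B) * lam <= G.
  have t1 : 2 * (lam - B) * lam <= 2 * (lam - B) * mm x0.
    by apply: ler_wpM2l => //; nra.
  exact: (le_trans t1 hG).
have G3 : (2 * (lam - B) * lam) ^+ 2 <= G ^+ 2.
  have t2 : 0 <= 2 * (lam - B) * lam by nra.
  exact: (sq_le t2 Gl).
have G2 : G ^+ 2 <= 2 * eps * (2 * D).
  have t3 : G ^+ 2 <= G ^+ 2 + complex.Im (g x0 (Mx x0)) ^+ 2 by rewrite lerDl sqr_ge0.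
  have t4 := le_trans t3 cs.
  have t5 : complex.Re (g x0 x0) * complex.Re (g (Mx x0) (Mx x0)) <= 2 * eps * (2 * D).
    by apply: ler_pM => //; exact: gP.
  exact: (le_trans t4 t5).
have e3 : eps * (D + 1) <= (lam - B) ^+ 2 * lam ^+ 2.
  by move: eps2; rewrite ler_pdivlMr // ltr_wpDl.
have : (lam - B) ^+ 2 * lam ^+ 2 <= eps * D.
  have e4 : (2 * (lam - B) * lam) ^+ 2 = 4 * ((lam - B) ^+ 2 * lam ^+ 2) by ring.
  have e5 : 2 * eps * (2 * D) = 4 * (eps * D) by ring.
  lra.
have : eps * D < eps * (D + 1) by rewrite ltr_pM2l // ltrDl.
lra.
Qed.
End Core.

Section Adj.
Variables (R : realType) (V : lmodType R[i]) (ip : V -> V -> R[i]) (A : V -> V).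
Hypothesis hH : is_hilbert ip.
Hypothesis hA : positive_op ip A.
Local Notation iA := (iA ip A).
Local Notation nA := (nf iA).
Let aL := aL hH hA. Let aH := aH hH hA. Let aP := aP hA.

Lemma adj_bound (X X' : V -> V) (a : R) : 0 <= a ->
  (forall x y, iA (X x) y = iA x (X' y)) -> (forall y, nA (X y) <= a * nA y) ->
  forall y, nA (X' y) <= a * nA y.
Proof.
move=> a0 adj hb y.
have h1 : nA (X' y) ^+ 2 <= nA (X (X' y)) * nA y.
  by rewrite (nf_sq aP) -adj; exact: Re_f_le aL aH aP _ _.
have h2 : nA (X (X' y)) * nA y <= a * nA (X' y) * nA y.
  by apply: ler_wpM2r; [exact: nf_ge0 | exact: hb].
have t0 := nf_ge0 iA (X' y). have y0 := nf_ge0 iA y.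
have [z|nz] := eqVneq (nA (X' y)) 0; first by rewrite z mulr_ge0.
have p : 0 < nA (X' y) by rewrite lt_neqAle eq_sym nz t0.
have h3 : nA (X' y) * nA (X' y) <= nA (X' y) * (a * nA y).
  rewrite -expr2; apply: le_trans h1 _; apply: le_trans h2 _.
  by rewrite le_eqVlt; apply/orP; left; apply/eqP; ring.
by rewrite ler_pM2l in h3.
Qed.
End Adj.

Unset Implicit Arguments.
Local Close Scope classical_set_scope.

Theorem theorem2p6 (R : realType) (V : lmodType R[i]) (ip : V -> V -> R[i])
  (A : V -> V) (T S : V -> V) :
  is_hilbert ip ->
  positive_op ip A -> (exists x : V, A x <> 0) ->
  BA ip A T -> BA ip A S ->
  omegaA ip A (T \o S) <=
    omegaA ip A (S \o T) / 2
    + (opnormA ip A T * opnormA ip A S + opnormA ip A (T \o S)) / 4.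
Proof.
move=> hH hA hx0 [[lT bT0] [T' [[lT' bT'0] adjT]]] [[lS bS0] [S' [[lS' bS'0] adjS]]].
have aL := aL hH hA; have aH := aH hH hA; have aP := aP hA.
have ex1 := unit_exists hH hA hx0.
have [cT [cT0 hcT]] := Abound hH hA lT bT0 lT' bT'0 adjT.
have [cS [cS0 hcS]] := Abound hH hA lS bS0 lS' bS'0 adjS.
have lTS : forall a x y, (T \o S) (a *: x + y) = a *: (T \o S) x + (T \o S) y.
  by move=> a x y /=; rewrite lS lT.
have lST : forall a x y, (S \o T) (a *: x + y) = a *: (S \o T) x + (S \o T) y.
  by move=> a x y /=; rewrite lT lS.
have bTS0 : exists c, forall y, nf (iA ip A) ((T \o S) y) <= c * nf (iA ip A) y.
  exists (cT * cS) => y /=; apply: le_trans (hcT _) _; rewrite -mulrA; apply: ler_wpM2l => //.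
have bST0 : exists c, forall y, nf (iA ip A) ((S \o T) y) <= c * nf (iA ip A) y.
  exists (cS * cT) => y /=; apply: le_trans (hcS _) _; rewrite -mulrA; apply: ler_wpM2l => //.
have bT := opn_ub hH hA lT (ex_intro _ cT hcT).
have bS := opn_ub hH hA lS (ex_intro _ cS hcS).
have al0 := opn_ge0 (ex_intro _ cT hcT) ex1.
have be0 := opn_ge0 (ex_intro _ cS hcS) ex1.
have P0 := opn_ge0 bTS0 ex1.
have om0 := om_ge0 hH hA bST0 ex1.
have bT' := adj_bound hH hA al0 adjT bT.
have bS' := adj_bound hH hA be0 adjS bS.
have bTS := opn_ub hH hA lTS bTS0.
have bST := om_ub hH hA lST bST0.
set al := opnormA ip A T in al0 bT bT' *.
set be := opnormA ip A S in be0 bS bS' *.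
set P := opnormA ip A (T \o S) in P0 bTS *.
set om := omegaA ip A (S \o T) in om0 bST *.
set B := om / 2 + (al * be + P) / 4.
have B0 : 0 <= B by rewrite /B addr_ge0 // divr_ge0 // addr_ge0 // mulr_ge0.
case: ex1 => e he.
apply: ge_sup.
  by exists (ComplexField.Normc.normc (ipA ip A ((T \o S) e) e)), e.
move=> r [x /= hx <-].
rewrite normA_nf in hx.
set w := ipA ip A (T (S x)) x.
have [al00|alp] := eqVneq al 0.
  apply: le_trans (nc_f_le aL aH aP _ _) _.
  have := bTS x; rewrite /= hx mulr1 => h1.
  have := bT (S x); rewrite al00 mul0r => h2.
  by rewrite mulr1; apply: le_trans h2 B0.
have [be00|bep] := eqVneq be 0.
  rewrite /w adjT; apply: le_trans (nc_f_le aL aH aP _ _) _.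
  have := bS x; rewrite be00 mul0r => h2.
  have h3 := nf_ge0 (iA ip A) (T' x).
  have h4 : nf (iA ip A) (S x) * nf (iA ip A) (T' x) <= 0.
    have h5 := nf_ge0 (iA ip A) (S x); nra.
  exact: le_trans h4 B0.
have alp' : 0 < al by rewrite lt_neqAle eq_sym alp al0.
have bep' : 0 < be by rewrite lt_neqAle eq_sym bep be0.
have [w0|wn] := eqVneq w 0.
  by rewrite w0 ComplexField.Normc.normc0.
have ncw : 0 < ComplexField.Normc.normc w.
  rewrite lt_neqAle nc_ge0 andbT eq_sym; apply/negP => /eqP h; apply/negP: wn; rewrite negbK.
  by apply/eqP; apply: nc_eq0.
pose u := ((ComplexField.Normc.normc w)^-1)%:C%C * conjc w.
have hu : ComplexField.Normc.normc u = 1.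
  by rewrite /u nc_M nc_C nc_J ger0_norm ?invr_ge0 ?nc_ge0 // mulVf // gt_eqF.
have hRe : complex.Re (u * w) = ComplexField.Normc.normc w.
  rewrite /u -mulrA ReCM ReM ReJ ImJ.
  have -> : complex.Re w * complex.Re w - - complex.Im w * complex.Im w = ComplexField.Normc.normc w ^+ 2.
    by rewrite nc_sq; ring.
  by rewrite expr2 mulrA mulVf ?gt_eqF // mul1r.
rewrite -hRe.
exact: (core hH hA lT lS lT' adjT adjS bT bS bT' bS' bTS bST alp' bep' P0 om0 hu hx).
Qed.
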